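(* Let $\mathbf{P}=\{p_n(x)\}_{n\ge0}$ be a sequence of complex polynomials with $\deg p_n=n$, $p_0=1$, and $p_n(0)=0$ for all $n\ge1$. Then for $n\ge1$ and $1\le k\le n$, $$S_2(n,k;\mathbf{P})=\frac{1}{k!}\sum_{j=1}^{k}\binom{n-j}{k-j}A_{n,j-1}(\mathbf{P}).$$
   Context: $S_2(n,k;\mathbf{P})$ is defined by $p_n(x)=\sum_{k=0}^{n}S_2(n,k;\mathbf{P})(x)_k$, with $(x)_0=1$, $(x)_k=x(x-1)\cdots(x-k+1)$. The Eulerian numbers $A_{n,k}(\mathbf{P})$ ($0\le k\le n$) are the unique coefficients with $p_n(x)=\sum_{k=0}^{n}A_{n,k}(\mathbf{P})\binom{x+n-k-1}{n}$, where $\binom{y}{n}=y(y-1)\cdots(y-n+1)/n!$. *)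

(* Defs.v *)
From HB Require Import structures.
From mathcomp Require Import all_boot all_order all_algebra.
From mathcomp Require Import reals.
From mathcomp Require Import complex.
Set Implicit Arguments. Unset Strict Implicit. Unset Printing Implicit Defensive.
Import Order.TTheory GRing.Theory Num.Theory.
Local Open Scope ring_scope.

Definition falling_poly (F : ringType) (k : nat) : {poly F} :=
  \prod_(i < k) ('X - (i%:R)%:P).

Definition binom_poly (F : fieldType) (n : nat) : {poly F} :=
  (n`!%:R)^-1 *: \prod_(i < n) ('X - (i%:R)%:P).

Definition eulerian_basis (F : fieldType) (n k : nat) : {poly F} :=
  binom_poly F n \Po ('X + ((n%:Z - k%:Z - 1)%:~R)%:P).

(* Main.v *)
Require Import Defs.
From HB Require Import structures.
From mathcomp Require Import all_boot all_order all_algebra.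
From mathcomp Require Import reals.
From mathcomp Require Import complex.
From mathcomp Require Import zify ring.
Import Order.TTheory GRing.Theory Num.Theory.
Lemma vand a m r : (\sum_(t < a.+1) 'C(a, t) * 'C(m, r + t) = 'C(m + a, r + a))%N.
Proof.
elim: a r => [|a IH] r; first by rewrite big_ord_recl big_ord0 !addn0 bin0 mul1n.
rewrite big_ord_recl /= bin0 mul1n.
under eq_bigr => i _ do rewrite /bump /= add1n binS mulnDl.
rewrite big_split /=.
under [X in _ + (_ + X)]eq_bigr => i _ do rewrite -addSnnS.
rewrite IH addnA.
have -> : 'C(m, r + 0) + \sum_(i < a.+1) 'C(a, i.+1) * 'C(m, r + i.+1)
   = \sum_(i < a.+2) 'C(a, i) * 'C(m, r + i).
  by rewrite [RHS]big_ord_recl /= bin0 mul1n.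
rewrite big_ord_recr /= bin_small // mul0n addn0 IH.
by rewrite !addnS binS addSn addnC.
Qed.

Local Open Scope ring_scope.

Section S.
Variable R : realType.
Local Notation F := (R[i]).

Lemma falling_monic k : falling_poly F k \is monic.
Proof. exact: monic_prod_XsubC. Qed.

Lemma falling_size k : size (falling_poly F k) = k.+1.
Proof.
elim: k => [|k IH]; first by rewrite /falling_poly big_ord0 size_poly1.
rewrite /falling_poly big_ord_recr /= size_Mmonic ?monicXsubC ?falling_monic //.
  by rewrite -/(falling_poly F k) IH size_XsubC addn2.
by rewrite monic_neq0 // falling_monic.
Qed.

Lemma falling_uniq N (c : nat -> F) :
  \sum_(k < N) c k *: falling_poly F k = 0 -> forall k, (k < N)%N -> c k = 0.
Proof.
elim: N => [//|N IH]; rewrite big_ord_recr /= => H.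
have cN : c N = 0.
  have := congr1 (fun q : {poly F} => q`_N) H.
  rewrite coefD coefZ coef0 coef_sum.
  have -> : (falling_poly F N)`_N = 1.
    by have /monicP := falling_monic N; rewrite /lead_coef falling_size.
  rewrite big1 ?add0r ?mulr1 // => i _.
  by rewrite coefZ nth_default ?mulr0 // falling_size.
move=> k; rewrite ltnS leq_eqVlt => /orP [/eqP -> //|kN].
apply: IH => //; by move: H; rewrite cN scale0r addr0.
Qed.

Lemma falling_eval k (m : nat) : (falling_poly F k).[m%:R] = (m ^_ k)%:R.
Proof.
rewrite /falling_poly horner_prod.
elim: k => [|k IH]; first by rewrite big_ord0.
rewrite big_ord_recr /= IH hornerXsubC ffactnSr natrM.
case: (leqP k m) => km; first by rewrite natrB.
by rewrite ffact_small // mulr0n !mul0r.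
Qed.

Lemma binom_eval n (N : nat) : (binom_poly F n).[N%:R] = ('C(N, n))%:R.
Proof.
rewrite /binom_poly hornerZ.
have := falling_eval n N; rewrite /falling_poly => ->.
rewrite -bin_ffact natrM mulrC mulrK //.
by rewrite unitfE pnatr_eq0 -lt0n fact_gt0.
Qed.

Lemma euler_eval n k (m : nat) : (k < m + n)%N ->
  (eulerian_basis F n k).[m%:R] = ('C(m + n - k - 1, n))%:R.
Proof.
move=> h; rewrite /eulerian_basis horner_comp hornerD hornerX hornerC.
have -> : (m%:R + (n%:Z - k%:Z - 1)%:~R : F) = (m + n - k - 1)%N%:R.
  have e : ((m + n - k - 1)%N%:Z = m%:Z + (n%:Z - k%:Z - 1))%R by lia.
  by rewrite -[RHS]/(((m + n - k - 1)%N%:Z)%:~R : F) e [RHS]intrD.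
exact: binom_eval.
Qed.



Lemma Ann_zero (p : nat -> {poly F}) (A : nat -> F) n (hn : (1 <= n)%N)
  (hpz : (p n).[0] = 0)
  (hA : p n = \sum_(k < n.+1) A k *: eulerian_basis F n k) : A n = 0.
Proof.
move: hpz; rewrite hA horner_sum big_ord_recr /= big1 ?add0r.
  rewrite hornerZ => /eqP; rewrite mulf_eq0 => /orP [/eqP //|].
  rewrite /eulerian_basis horner_comp hornerD hornerX hornerC add0r.
  rewrite /binom_poly hornerZ horner_prod mulf_eq0 invr_eq0 pnatr_eq0.
  rewrite eqn0Ngt fact_gt0 /=.
  have -> : ((n%:Z - n%:Z - 1)%:~R : F) = -1 by rewrite subrr sub0r rmorphN1.
  move=> H; exfalso; move: H; apply/negP; apply/prodf_neq0 => i _.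
  by rewrite hornerXsubC -opprD oppr_eq0 nat1r pnatr_eq0.
move=> i _; rewrite hornerZ.
have := euler_eval n i 0; rewrite add0n ltn_ord => /(_ isT) ->.
by rewrite bin_small ?mulr0 //; lia.
Qed.

Lemma inner_sum (a : F) n m j : (1 <= j <= n)%N ->
  \sum_(0 <= k < n.+1) (if (j <= k)%N then 'C(n - j, k - j)%:R * a * 'C(m, k)%:R else 0)
  = a * 'C(m + n - j, n)%:R.
Proof.
move=> /andP [j1 jn].
rewrite (big_cat_nat (n:=j)) /=; [|by []|by lia].
rewrite [X in X + _]big_nat_cond big1 ?add0r; last first.
  by move=> k /andP [/andP [_ kj] _]; rewrite leqNgt kj.
rewrite (eq_big_nat _ _ (F2 := fun k => 'C(n - j, k - j)%:R * a * 'C(m, k)%:R)); last first.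
  by move=> k /andP [-> _].
rewrite -{1}[j]add0n big_addn.
under eq_bigr => t _ do rewrite addnK mulrAC.
rewrite -mulr_suml mulrC; congr (_ * _).
have -> : (n.+1 - j = (n - j).+1)%N by lia.
rewrite big_mkord.
under eq_bigr => t _ do rewrite -natrM addnC.
rewrite -natr_sum vand.
have -> : (m + (n - j) = m + n - j)%N by lia.
have -> : (j + (n - j) = n)%N by lia.
by [].
Qed.

Lemma key (A : nat -> F) n m :
  \sum_(k < n.+1) ((k`!%:R)^-1 * \sum_(1 <= j < k.+1) 'C(n - j, k - j)%:R * A (j - 1)%N) * (m ^_ k)%:R
  = \sum_(i < n) A i * 'C(m + n - i - 1, n)%:R.
Proof.
have E : forall k (X : F), (k`!%:R)^-1 * X * (m ^_ k)%:R = X * 'C(m, k)%:R.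
  move=> k X; rewrite -bin_ffact natrM (mulrC (_^-1) X) -!mulrA; congr (_ * _).
  by rewrite mulrCA mulVf ?mulr1 // pnatr_eq0 -lt0n fact_gt0.
under eq_bigr => k _ do rewrite E mulr_suml.
transitivity (\sum_(0 <= k < n.+1) \sum_(1 <= j < n.+1)
   (if (j <= k)%N then 'C(n - j, k - j)%:R * A (j - 1)%N * 'C(m, k)%:R else 0)).
  rewrite [RHS]big_mkord; apply: eq_bigr => k _.
  rewrite (big_nat_widen _ _ n.+1) ?ltn_ord // big_mkcond /=.
  by apply: eq_bigr => j _; rewrite ltnS.
rewrite exchange_big_nat /=.
rewrite (eq_big_nat _ _ (F2 := fun j => A (j - 1)%N * 'C(m + n - j, n)%:R)); last first.
  by move=> j Hj; apply: inner_sum; lia.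
rewrite big_add1 /= big_mkord; apply: eq_bigr => i _.
have -> : (m + n - i.+1 = m + n - i - 1)%N by lia.
by have -> : (i.+1 - 1 = i)%N by lia.
Qed.

End S.

Theorem theorem3p3 (R : realType) (p : nat -> {poly R[i]})
  (hdeg : forall n, size (p n) = n.+1)
  (hp0 : p 0%N = 1)
  (hpz : forall n, (1 <= n)%N -> (p n).[0] = 0)
  (S2 A : nat -> nat -> R[i])
  (hS2 : forall n, p n = \sum_(k < n.+1) S2 n k *: falling_poly R[i] k)
  (hA : forall n, p n = \sum_(k < n.+1) A n k *: eulerian_basis R[i] n k)
  (n k : nat) (hn : (1 <= n)%N) (hk1 : (1 <= k)%N) (hkn : (k <= n)%N) :
  S2 n k = (k`!%:R)^-1 *
    \sum_(1 <= j < k.+1) ('C(n - j, k - j))%:R * A n (j - 1)%N.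
Proof.
have Ann : A n n = 0 := @Ann_zero R p (A n) n hn (hpz n hn) (hA n).
have Hq : \sum_(k < n.+1) ((k`!%:R)^-1 *
    \sum_(1 <= j < k.+1) ('C(n - j, k - j))%:R * A n (j - 1)%N) *: falling_poly R[i] k = p n.
  apply/eqP; rewrite -subr_eq0; apply/eqP.
  apply: (@roots_geq_poly_eq0 _ _ [seq (m.+1)%:R | m <- iota 0 n.+1]).
  - apply/allP => x /mapP [m _ ->]; rewrite rootE hornerD hornerN subr_eq0; apply/eqP.
    rewrite horner_sum; under eq_bigr => j _ do rewrite hornerZ falling_eval.
    rewrite key [in RHS]hA horner_sum big_ord_recr /= hornerZ Ann mul0r addr0.
    apply: eq_bigr => i _; rewrite hornerZ euler_eval //; have := ltn_ord i; lia.
  - rewrite map_inj_uniq ?iota_uniq // => a b /eqP.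
    by rewrite eqr_nat eqSS => /eqP ->.
  - rewrite size_map size_iota.
    apply: leq_trans (size_polyD _ _) _; rewrite size_polyN hdeg geq_max leqnn andbT.
    apply: leq_trans (size_sum _ _ _) _; apply/bigmax_leqP => j _.
    by apply: leq_trans (size_scale_leq _ _) _; rewrite falling_size ltn_ord.
have := hS2 n; rewrite -Hq => /eqP; rewrite -subr_eq0 -sumrB => /eqP H.
move: H; under eq_bigr => j _ do rewrite -scalerBl; move=> H.
have := @falling_uniq R n.+1 (fun j => (j`!%:R^-1 * \sum_(1 <= j0 < j.+1) 'C(n - j0, j - j0)%:R * A n (j0 - 1)%N - S2 n j)) H k hkn => /eqP; rewrite subr_eq0 => /eqP.
by move=> ->.
Qed.
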